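(* Let $(\vec s_i)_{i\in\mathbb N}$ be a strictly increasing sequence of oriented separations of a graph $G$ and $(P_i)_{i\in\mathbb N}$ a sequence of pre-tangles in $G$. Suppose that (IM1) $\overleftarrow{s}_i\in P_i$ and $\vec s_i\in P_{i+1}$ for all $i$, and (IM2') the separation $s_i$ efficiently distinguishes $P_i$ and $P_{i+1}$ for all $i$. Then (IM2) holds: for all $i<j$, every separation of minimal order among $s_i,\dots,s_{j-1}$ efficiently distinguishes $P_i$ and $P_j$.
   Context: Notation: $s$ denotes a separation (an unordered pair $\{A,B\}$ of subsets of $V(G)$ with $A\cup B=V(G)$ and no edge between $A\setminus B$ and $B\setminus A$; order $|s|=|A\cap B|$), $\vec s$ and $\overleftarrow{s}$ its two orientations $(A,B)$, $(B,A)$; oriented separations are ordered by $(A,B)\le(C,D)$ iff $A\subseteq C$ and $B\supseteq D$. A set $O$ of oriented separations is consistent if there are no $(A,B),(C,D)\in O$ with $\{A,B\}\ne\{C,D\}$ and $(B,A)\le(C,D)$. A pre-tangle is a consistent set $P$ which, for some $k\in\mathbb N\cup\{\aleph_0\}$, contains exactly one orientation of every separation of order $<k$ and nothing else. A separation distinguishes two pre-tangles if both contain an orientation of it but different ones; efficiently if it has minimum order among all separations distinguishing them. *)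

(* Defs.v *)
From Stdlib Require Import List Arith.
Set Implicit Arguments.

Section Seps.
Variable V : Type.
Variable E : V -> V -> Prop.

Definition osep := ((V -> Prop) * (V -> Prop))%type.

Definition flip (s : osep) : osep := (snd s, fst s).

Definition is_sep (s : osep) : Prop :=
  (forall v, fst s v \/ snd s v) /\
  (forall u v, fst s u -> ~ snd s u -> snd s v -> ~ fst s v -> ~ E u v).

Definition same_sep (s t : osep) : Prop := t = s \/ t = flip s.

(* Order of separations as cardinals: |A ∩ B| <= |C ∩ D| (injection). *)
Definition order_le (s t : osep) : Prop :=
  exists f : {v | fst s v /\ snd s v} -> {v | fst t v /\ snd t v},
    forall x y, f x = f y -> x = y.

Definition has_order (s : osep) (n : nat) : Prop :=
  exists l : list V, NoDup l /\ length l = n /\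
    (forall v, In v l <-> (fst s v /\ snd s v)).

(* k ∈ ℕ ∪ {ℵ0}: Some m = m, None = ℵ0.  order(s) < k. *)
Definition order_lt_k (s : osep) (k : option nat) : Prop :=
  match k with
  | Some m => exists n, has_order s n /\ n < m
  | None => exists n, has_order s n
  end.

Definition osep_le (s t : osep) : Prop :=
  (forall v, fst s v -> fst t v) /\ (forall v, snd t v -> snd s v).

Definition osep_lt (s t : osep) : Prop := osep_le s t /\ s <> t.

Definition consistent (O : osep -> Prop) : Prop :=
  forall s t, O s -> O t -> ~ same_sep s t -> ~ osep_le (flip s) t.

Definition pre_tangle (P : osep -> Prop) : Prop :=
  consistent P /\
  exists k : option nat,
    (forall s, is_sep s -> order_lt_k s k ->
       (P s \/ P (flip s)) /\ (P s -> P (flip s) -> s = flip s)) /\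
    (forall s, P s -> is_sep s /\ order_lt_k s k).

Definition distinguishes (s : osep) (P Q : osep -> Prop) : Prop :=
  exists x y, same_sep s x /\ same_sep s y /\ P x /\ Q y /\ x <> y.

Definition eff_distinguishes (s : osep) (P Q : osep -> Prop) : Prop :=
  distinguishes s P Q /\
  forall t, is_sep t -> distinguishes t P Q -> order_le s t.

End Seps.

(* Main.v *)
Require Import Defs.
From Stdlib Require Import List Arith Lia Classical ClassicalEpsilon FunctionalExtensionality PropExtensionality ProofIrrelevance.
Set Implicit Arguments.

Lemma sig_ext (A : Type) (Q : A -> Prop) (x y : sig Q) :
  proj1_sig x = proj1_sig y -> x = y.
Proof. destruct x as [a pa], y as [b pb]; simpl; intros ->; f_equal; apply proof_irrelevance. Qed.

Lemma flip_flip (V : Type) (s : osep V) : flip (flip s) = s.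
Proof. destruct s; reflexivity. Qed.

Lemma has_order_flip (V : Type) (s : osep V) n : has_order (flip s) n <-> has_order s n.
Proof.
  destruct s as [a b]; unfold has_order; simpl; split; intros [l [H1 [H2 H3]]];
  exists l; (split; [auto|split; [auto|intro v; specialize (H3 v); tauto]]).
Qed.

Lemma has_order_uniq (V : Type) (s : osep V) a b : has_order s a -> has_order s b -> a = b.
Proof.
  intros [l1 [N1 [L1 I1]]] [l2 [N2 [L2 I2]]]; subst.
  apply Nat.le_antisymm; apply NoDup_incl_length; auto; intros v Hv;
  [apply I2, I1, Hv | apply I1, I2, Hv].
Qed.

Lemma order_le_len {V : Type} {s t : osep V} {a b} :
  order_le s t -> has_order s a -> has_order t b -> a <= b.
Proof.
  intros [f Hf] [ls [Ns [Ls Is]]] [lT [Nt [LT It]]]; subst.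
  set (g := fun v => match excluded_middle_informative (fst s v /\ snd s v) with
                     | left h => proj1_sig (f (exist _ v h)) | right _ => v end).
  rewrite <- (length_map g ls).
  apply NoDup_incl_length.
  - apply NoDup_map_NoDup_ForallPairs; auto.
    intros x y Hx Hy; unfold g.
    destruct (excluded_middle_informative (fst s x /\ snd s x)) as [hx|hx];
    [|exfalso; apply hx, Is, Hx].
    destruct (excluded_middle_informative (fst s y /\ snd s y)) as [hy|hy];
    [|exfalso; apply hy, Is, Hy].
    intros E1. apply sig_ext in E1. apply Hf in E1.
    exact (f_equal (@proj1_sig _ _) E1).
  - intros w Hw. apply in_map_iff in Hw as [v [<- Hv]]. unfold g.
    destruct (excluded_middle_informative (fst s v /\ snd s v)) as [hv|hv];
    [|exfalso; apply hv, Is, Hv].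
    apply It. exact (proj2_sig (f (exist _ v hv))).
Qed.

Fixpoint pos {V : Type} (v : V) (l : list V) : nat :=
  match l with
  | nil => 0
  | a :: l' => if excluded_middle_informative (a = v) then 0 else S (pos v l')
  end.

Lemma pos_lt (V : Type) (v : V) l : In v l -> pos v l < length l.
Proof.
  induction l as [|a l IH]; simpl; [tauto|].
  destruct (excluded_middle_informative (a = v)); intros [H|H]; try lia; try congruence.
  specialize (IH H); lia.
Qed.

Lemma pos_nth (V : Type) (v d : V) l : In v l -> nth (pos v l) l d = v.
Proof.
  induction l as [|a l IH]; simpl; [tauto|].
  destruct (excluded_middle_informative (a = v)); intros [H|H]; auto; congruence.
Qed.

Lemma len_order_le {V : Type} {s t : osep V} {a b} :
  has_order s a -> has_order t b -> a <= b -> order_le s t.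
Proof.
  intros [ls [Ns [Ls Is]]] [lT [Nt [LT It]]] Hab; subst.
  assert (H : forall x : {v | fst s v /\ snd s v},
            fst t (nth (pos (proj1_sig x) ls) lT (proj1_sig x)) /\
            snd t (nth (pos (proj1_sig x) ls) lT (proj1_sig x))).
  { intros [v hv]; simpl. apply It, nth_In. apply Is in hv. apply pos_lt in hv. lia. }
  exists (fun x => exist (fun v => fst t v /\ snd t v) _ (H x)).
  intros [x hx] [y hy] E1. apply sig_ext; simpl.
  apply (f_equal (@proj1_sig _ _)) in E1; simpl in E1.
  apply Is in hx; apply Is in hy.
  assert (pos x ls = pos y ls).
  { apply (proj1 (NoDup_nth lT x) Nt).
    - pose proof (@pos_lt _ x ls hx); lia.
    - pose proof (@pos_lt _ y ls hy); lia.
    - rewrite E1. apply nth_indep. pose proof (@pos_lt _ y ls hy); lia. }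
  rewrite <- (@pos_nth _ x x ls hx), <- (@pos_nth _ y x ls hy). congruence.
Qed.

Lemma pt_fin {V : Type} {E : V -> V -> Prop} {P u} :
  pre_tangle E P -> P u -> is_sep E u /\ exists n, has_order u n.
Proof.
  intros [_ [k [_ H2]]] Hu. destruct (H2 u Hu) as [Hs Ho]. split; auto.
  destruct k as [m|]; simpl in Ho; [destruct Ho as [n [Hn _]]|]; eauto.
Qed.

Lemma pt_orient {V : Type} {E : V -> V -> Prop} {P u t a b} :
  pre_tangle E P -> P u -> has_order u a -> is_sep E t -> has_order t b -> b <= a ->
  P t \/ P (flip t).
Proof.
  intros [_ [k [H1 H2]]] Hu Ha Ht Hb Hba. apply H1; auto.
  destruct (H2 u Hu) as [_ Ho]. destruct k as [m|]; simpl in *.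
  - destruct Ho as [n0 [Hn Hlt]]. rewrite (has_order_uniq Hn Ha) in Hlt. exists b; split; auto; lia.
  - eauto.
Qed.

Lemma pt_uniq {V : Type} {E : V -> V -> Prop} {P u} :
  pre_tangle E P -> P u -> P (flip u) -> u = flip u.
Proof.
  intros [_ [k [H1 H2]]] Hu Hf. destruct (H2 u Hu). apply (H1 u); auto.
Qed.

Lemma chain (V : Type) (E : V -> V -> Prop)
  (s : nat -> osep V) (P : nat -> (osep V -> Prop))
  (Hinc : forall i j, i < j -> osep_lt (s i) (s j))
  (Hpt : forall i, pre_tangle E (P i))
  (IM1 : forall i, P i (flip (s i)) /\ P (S i) (s i)) l0 :
  (forall v, fst (s l0) v) -> False.
Proof.
  intros Hall.
  assert (ord : forall l, exists n, has_order (s l) n).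
  { intro l. destruct (pt_fin (Hpt l) (proj1 (IM1 l))) as [_ [n Hn]].
    exists n. apply has_order_flip, Hn. }
  destruct (ord l0) as [n0 H0].
  assert (C : forall q, (forall v, fst (s (l0 + q)) v) /\
                exists m, has_order (s (l0 + q)) m /\ m + q <= n0).
  { induction q as [|q [IH1 [m [Hm Hq]]]].
    - rewrite Nat.add_0_r. split; auto. exists n0; split; auto; lia.
    - rewrite Nat.add_succ_r.
      destruct (Hinc (l0 + q) (S (l0 + q))) as [[L1 L2] Ne]; [lia|].
      assert (F : forall v, fst (s (S (l0 + q))) v) by (intro; apply L1, IH1).
      split; auto.
      destruct (ord (S (l0 + q))) as [m' Hm']. exists m'; split; auto.
      assert (Ex : exists v, snd (s (l0 + q)) v /\ ~ snd (s (S (l0 + q))) v).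
      { apply NNPP; intro Hn. apply Ne.
        destruct (s (l0 + q)) as [a b] eqn:Ea, (s (S (l0 + q))) as [c d] eqn:Ec.
        simpl in *. f_equal.
        - apply functional_extensionality; intro v; apply propositional_extensionality.
          specialize (IH1 v); specialize (F v); tauto.
        - apply functional_extensionality; intro v; apply propositional_extensionality.
          split; auto. intro Hb. apply NNPP; intro Hd. apply Hn; eauto. }
      destruct Ex as [v [Hv1 Hv2]].
      destruct Hm as [la [Na [La Ia]]], Hm' as [lb [Nb [Lb Ib]]]; subst.
      assert (length (v :: lb) <= length la).
      { apply NoDup_incl_length.
        - constructor; auto. intro Hin. apply Ib in Hin. tauto.
        - intros w [<-|Hw]; apply Ia; split; auto. apply Ib in Hw. apply L2; tauto. }
      simpl in *; lia. }
  destruct (C (S n0)) as [_ [m [_ Hm]]]. lia.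
Qed.

Lemma same_sep_two (V : Type) (t x y : osep V) :
  same_sep t x -> same_sep t y -> x <> y -> y = flip x.
Proof.
  unfold same_sep; intros [->| ->] [->| ->] H; try congruence; auto using flip_flip.
Qed.

Theorem mainTheorem13 (V : Type) (E : V -> V -> Prop)
  (Esym : forall u v, E u v -> E v u) (Eirr : forall v, ~ E v v)
  (s : nat -> osep V) (P : nat -> (osep V -> Prop))
  (Hsep : forall i, is_sep E (s i))
  (Hinc : forall i j, i < j -> osep_lt (s i) (s j))
  (Hpt : forall i, pre_tangle E (P i))
  (IM1 : forall i, P i (flip (s i)) /\ P (S i) (s i))
  (IM2' : forall i, eff_distinguishes E (s i) (P i) (P (S i))) :
  forall i j, i < j ->
    forall k, i <= k < j ->
      (forall l, i <= l < j -> order_le (s k) (s l)) ->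
      eff_distinguishes E (s k) (P i) (P j).
Proof.
  intros i j Hij k [Hik Hkj] Hmin.
  assert (ord : forall l, exists n, has_order (s l) n).
  { intro l. destruct (pt_fin (Hpt l) (proj1 (IM1 l))) as [_ [n Hn]].
    exists n. apply has_order_flip, Hn. }
  assert (Hkf : s k <> flip (s k)).
  { destruct (IM2' k) as [[x [y [Hx [Hy [_ [_ Hxy]]]]]] _]. intro Heq.
    apply Hxy. unfold same_sep in *. rewrite <- Heq in Hx, Hy. intuition congruence. }
  destruct (ord k) as [nk Hnk].
  assert (Hle : forall l, i <= l < j -> forall n, has_order (s l) n -> nk <= n).
  { intros l Hl n Hn. exact (order_le_len (Hmin l Hl) Hnk Hn). }
  assert (HPi : P i (flip (s k))).
  { destruct (ord i) as [ni Hni].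
    destruct (pt_orient (Hpt i) (proj1 (IM1 i)) (proj2 (has_order_flip _ _) Hni)
                (Hsep k) Hnk (Hle i ltac:(lia) ni Hni)) as [H|H]; auto.
    exfalso.
    destruct (Nat.eq_dec i k) as [<-|Hik'].
    - apply Hkf. exact (pt_uniq (Hpt i) H (proj1 (IM1 i))).
    - destruct (Hinc i k ltac:(lia)) as [[L1 L2] Ne].
      destruct (classic (same_sep (s k) (flip (s i)))) as [[Hs|Hs]|Hs].
      + apply (@chain V E s P Hinc Hpt IM1 k). intro v.
        destruct (Hsep i) as [Hc _]. destruct (Hc v) as [Hv|Hv]; auto.
        rewrite <- Hs. exact Hv.
      + apply Ne. rewrite <- (flip_flip (s i)), Hs, flip_flip. reflexivity.
      + apply (proj1 (Hpt i) (s k) (flip (s i)) H (proj1 (IM1 i)) Hs).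
        split; simpl; auto. }
  assert (HPj : P j (s k)).
  { destruct j as [|m]; [lia|].
    destruct (Nat.eq_dec k m) as [<-|Hkm]; [exact (proj2 (IM1 k))|].
    destruct (ord m) as [nm Hnm].
    destruct (pt_orient (Hpt (S m)) (proj2 (IM1 m)) Hnm
                (Hsep k) Hnk (Hle m ltac:(lia) nm Hnm)) as [H|H]; auto.
    exfalso.
    destruct (Hinc k m ltac:(lia)) as [[L1 L2] Ne].
    destruct (classic (same_sep (flip (s k)) (s m))) as [[Hs|Hs]|Hs].
    - apply (@chain V E s P Hinc Hpt IM1 m). intro v.
      destruct (Hsep k) as [Hc _]. destruct (Hc v) as [Hv|Hv]; auto.
      rewrite Hs. exact Hv.
    - apply Ne. rewrite Hs, flip_flip. reflexivity.
    - apply (proj1 (Hpt (S m)) (flip (s k)) (s m) H (proj2 (IM1 m)) Hs).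
      rewrite flip_flip. split; auto. }
  split.
  - exists (flip (s k)), (s k). unfold same_sep. repeat split; auto.
  - intros t Ht [x [y [Hx [Hy [Px [Py Hxy]]]]]].
    destruct (pt_fin (Hpt i) Px) as [_ [nt Hnt]].
    assert (Hnt' : has_order t nt).
    { destruct Hx as [->| ->]; auto. apply has_order_flip; auto. }
    destruct (le_lt_dec nk nt) as [Hkt|Htk].
    + exact (len_order_le Hnk Hnt' Hkt).
    + exfalso.
      assert (Sw : forall d, i + d <= j -> P (i + d) x \/
                     exists l, i <= l < j /\ distinguishes t (P l) (P (S l))).
      { induction d as [|d IH]; intros Hd.
        - rewrite Nat.add_0_r; auto.
        - destruct IH as [IH|IH]; [lia| |auto].
          rewrite Nat.add_succ_r.
          destruct (ord (i + d)) as [nl Hnl].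
          assert (nk <= nl) by (apply (Hle (i + d)); auto; lia).
          assert (Hz : exists z, same_sep t z /\ P (S (i + d)) z).
          { destruct (pt_orient (Hpt (S (i + d))) (proj2 (IM1 (i + d))) Hnl
                        Ht Hnt' ltac:(lia)) as [H'|H'].
            - exists t; split; auto. left; auto.
            - exists (flip t); split; auto. right; auto. }
          destruct Hz as [z [Hz1 Hz2]].
          destruct (classic (z = x)) as [<-|Hzx]; auto.
          right. exists (i + d); split; [lia|].
          exists x, z; repeat split; auto. }
      destruct (Sw (j - i) ltac:(lia)) as [H|[l [Hl [x' [y' [Hx' [Hy' [Px' [Py' Hxy']]]]]]]]].
      * replace (i + (j - i)) with j in H by lia.
        pose proof (same_sep_two Hx Hy Hxy) as Hyx. subst y.
        apply Hxy. exact (pt_uniq (Hpt j) H Py).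
      * destruct (IM2' l) as [_ Hef].
        pose proof (Hef t Ht (ex_intro _ x' (ex_intro _ y' (conj Hx' (conj Hy' (conj Px' (conj Py' Hxy'))))))) as Hlt.
        destruct (ord l) as [nl Hnl].
        pose proof (order_le_len Hlt Hnl Hnt').
        pose proof (Hle l Hl nl Hnl). lia.
Qed.
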